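(* The entanglement of the domino $D_{14}$ is at least $4$.
   Context: The domino $D_n$ is the graph with vertices $v_i,w_i$ ($i=0,\dots,n$) and edges $v_iv_{i+1},w_iw_{i+1}$ ($i=0,\dots,n-1$) and $v_iw_i$ ($i=0,\dots,n$). Entanglement: in the game $\mathrm{Ent}(G,k)$ Thief plays against $k$ cops on the undirected graph $G$. Initially no cop is placed and Thief picks a vertex. Each round, Cops may do nothing, place a new cop (at most $k$ in total) on Thief's current vertex, or move a placed cop to Thief's current vertex; then Thief must move along an edge to an adjacent vertex not occupied by a cop, and is caught (Cops win) if he cannot. Infinite plays are won by Thief. $\mathrm{Ent}(G)$ is the least $k$ for which Cops have a winning strategy. *)

(* Defs.v *)
From mathcomp Require Import all_boot.
Set Implicit Arguments. Unset Strict Implicit. Unset Printing Implicit Defensive.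

(* The domino D_n: vertices (i, false) = v_i and (i, true) = w_i, i = 0..n. *)
Definition domino (n : nat) : rel ('I_n.+1 * bool) :=
  fun x y =>
    ((x.2 == y.2) && (((val x.1).+1 == val y.1) || ((val y.1).+1 == val x.1)))
    || ((val x.1 == val y.1) && (x.2 != y.2)).

Definition cop_move (T : finType) (k : nat) (C : {set T}) (v : T) (C' : {set T})
  : Prop :=
  C' = C \/ (#|C| < k /\ C' = v |: C) \/ (exists2 u, u \in C & C' = v |: (C :\ u)).

(* Thief is caught when no neighbour of v outside C' exists (the universal
   premise is then vacuous). *)
Inductive cops_win (T : finType) (e : rel T) (k : nat) : {set T} -> T -> Prop :=
| CopsWin (C : {set T}) (v : T) (C' : {set T}) :
    cop_move k C v C' ->
    (forall w, e v w -> w \notin C' -> cops_win e k C' w) ->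
    cops_win e k C v.

Definition Ent_cops_win (T : finType) (e : rel T) (k : nat) : Prop :=
  forall v : T, cops_win e k set0 v.

(* Main.v *)
Require Import Defs.
From mathcomp Require Import all_boot.
From mathcomp Require Import zify.

Set Implicit Arguments. Unset Strict Implicit. Unset Printing Implicit Defensive.

Definition badtab : seq (seq (seq (seq nat))) := [::
  [:: [::]; [:: [:: 1; 2]; [:: 1; 2; 3]; [:: 1; 2; 4]; [:: 1; 2; 5]; [:: 1; 2; 6]; [:: 1; 2; 7]; [:: 1; 2; 8]; [:: 1; 2; 9]; [:: 1; 2; 10]; [:: 1; 2; 11]; [:: 1; 2; 12]; [:: 1; 2; 13]; [:: 1; 2; 14]; [:: 1; 2; 15]; [:: 1; 2; 16]; [:: 1; 2; 17]; [:: 1; 2; 18]; [:: 1; 2; 19]; [:: 1; 2; 20]; [:: 1; 2; 21]; [:: 1; 2; 22]; [:: 1; 2; 23]; [:: 1; 2; 24]; [:: 1; 2; 25]; [:: 1; 2; 26]; [:: 1; 2; 27]; [:: 1; 2; 28]; [:: 1; 2; 29]; [:: 1; 3; 4]; [:: 1; 4; 5]; [:: 1; 4; 7]; [:: 1; 5; 6]]; [:: [:: 2; 3]; [:: 2; 5]; [:: 2; 3; 4]; [:: 2; 3; 5]; [:: 2; 3; 6]; [:: 2; 3; 7]; [:: 2; 3; 8]; [:: 2; 3; 9]; [:: 2; 3; 10]; [:: 2; 3; 11]; [:: 2; 3; 12]; [:: 2; 3; 13]; [:: 2; 3; 14]; [:: 2; 3; 15]; [:: 2; 3; 16]; [:: 2;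 3; 17]; [:: 2; 3; 18]; [:: 2; 3; 19]; [:: 2; 3; 20]; [:: 2; 3; 21]; [:: 2; 3; 22]; [:: 2; 3; 23]; [:: 2; 3; 24]; [:: 2; 3; 25]; [:: 2; 3; 26]; [:: 2; 3; 27]; [:: 2; 3; 28]; [:: 2; 3; 29]; [:: 2; 4; 5]; [:: 2; 4; 7]; [:: 2; 5; 6]; [:: 2; 5; 7]; [:: 2; 5; 8]; [:: 2; 5; 9]; [:: 2; 5; 10]; [:: 2; 5; 11]; [:: 2; 5; 12]; [:: 2; 5; 13]; [:: 2; 5; 14]; [:: 2; 5; 15]; [:: 2; 5; 16]; [:: 2; 5; 17]; [:: 2; 5; 18]; [:: 2; 5; 19]; [:: 2; 5; 20]; [:: 2; 5; 21]; [:: 2; 5; 22]; [:: 2; 5; 23]; [:: 2; 5; 24]; [:: 2; 5; 25]; [:: 2; 5; 26]; [:: 2; 5; 27]; [:: 2; 5; 28]; [:: 2; 5; 29]]; [:: [:: 3; 4]; [:: 3; 4; 5]; [:: 3; 4; 6]; [:: 3; 4; 7]; [:: 3; 4; 8]; [:: 3; 4; 9]; [:: 3; 4; 10]; [:: 3; 4; 11]; [:: 3; 4; 12]; [:: 3; 4; 13]; [:: 3; 4; 14]; [:: 3; 4; 15]; [:: 3; 4; 16]; [:: 3; 4; 17]; [:: 3; 4; 18]; [:: 3; 4; 19]; [:: 3; 4; 20]; [:: 3; 4; 21]; [:: 3; 4; 22]; [:: 3; 4; 23]; [:: 3; 4; 24]; [:: 3; 4; 25]; [:: 3; 4; 26];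 [:: 3; 4; 27]; [:: 3; 4; 28]; [:: 3; 4; 29]; [:: 3; 5; 6]]; [:: [:: 4; 5]; [:: 4; 7]; [:: 4; 5; 6]; [:: 4; 5; 7]; [:: 4; 5; 8]; [:: 4; 5; 9]; [:: 4; 5; 10]; [:: 4; 5; 11]; [:: 4; 5; 12]; [:: 4; 5; 13]; [:: 4; 5; 14]; [:: 4; 5; 15]; [:: 4; 5; 16]; [:: 4; 5; 17]; [:: 4; 5; 18]; [:: 4; 5; 19]; [:: 4; 5; 20]; [:: 4; 5; 21]; [:: 4; 5; 22]; [:: 4; 5; 23]; [:: 4; 5; 24]; [:: 4; 5; 25]; [:: 4; 5; 26]; [:: 4; 5; 27]; [:: 4; 5; 28]; [:: 4; 5; 29]; [:: 4; 6; 7]; [:: 4; 7; 8]; [:: 4; 7; 9]; [:: 4; 7; 10]; [:: 4; 7; 11]; [:: 4; 7; 12]; [:: 4; 7; 13]; [:: 4; 7; 14]; [:: 4; 7; 15]; [:: 4; 7; 16]; [:: 4; 7; 17]; [:: 4; 7; 18]; [:: 4; 7; 19]; [:: 4; 7; 20]; [:: 4; 7; 21]; [:: 4; 7; 22]; [:: 4; 7; 23]; [:: 4; 7; 24]; [:: 4; 7; 25]; [:: 4; 7; 26]; [:: 4; 7; 27]; [:: 4; 7; 28]; [:: 4; 7; 29]]; [:: [:: 5; 6]; [:: 5; 6; 7]; [:: 5; 6; 8]; [:: 5; 6; 9]; [:: 5; 6; 10]; [:: 5; 6; 11]; [:: 5; 6; 12]; [:: 5; 6; 13]; [:: 5; 6;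 14]; [:: 5; 6; 15]; [:: 5; 6; 16]; [:: 5; 6; 17]; [:: 5; 6; 18]; [:: 5; 6; 19]; [:: 5; 6; 20]; [:: 5; 6; 21]; [:: 5; 6; 22]; [:: 5; 6; 23]; [:: 5; 6; 24]; [:: 5; 6; 25]; [:: 5; 6; 26]; [:: 5; 6; 27]; [:: 5; 6; 28]; [:: 5; 6; 29]]; [::]; [::]; [::]; [::]; [::]; [::]; [::]; [::]; [::]; [::]; [::]; [::]; [::]; [::]; [::]; [::]; [::]; [::]; [::]; [::]; [::]; [::]; [::]; [::]; [::]];
  [:: [:: [:: 0; 3]; [:: 0; 2; 3]; [:: 0; 2; 5]; [:: 0; 3; 4]; [:: 0; 3; 5]; [:: 0; 3; 6]; [:: 0; 3; 7]; [:: 0; 3; 8]; [:: 0; 3; 9]; [:: 0; 3; 10]; [:: 0; 3; 11]; [:: 0; 3; 12]; [:: 0; 3; 13]; [:: 0; 3; 14]; [:: 0; 3; 15]; [:: 0; 3; 16]; [:: 0; 3; 17]; [:: 0; 3; 18]; [:: 0; 3; 19]; [:: 0; 3; 20]; [:: 0; 3; 21]; [:: 0; 3; 22]; [:: 0; 3; 23]; [:: 0; 3; 24]; [:: 0; 3; 25]; [:: 0; 3; 26]; [:: 0; 3; 27]; [:: 0; 3; 28]; [:: 0; 3; 29]; [:: 0; 4; 5]; [:: 0; 4; 7]; [:: 0; 5; 6]]; [::]; [:: [:: 2; 3]; [:: 2; 5]; [:: 2; 3; 4]; [:: 2; 3; 5]; [:: 2; 3; 6]; [:: 2; 3; 7];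 [:: 2; 3; 8]; [:: 2; 3; 9]; [:: 2; 3; 10]; [:: 2; 3; 11]; [:: 2; 3; 12]; [:: 2; 3; 13]; [:: 2; 3; 14]; [:: 2; 3; 15]; [:: 2; 3; 16]; [:: 2; 3; 17]; [:: 2; 3; 18]; [:: 2; 3; 19]; [:: 2; 3; 20]; [:: 2; 3; 21]; [:: 2; 3; 22]; [:: 2; 3; 23]; [:: 2; 3; 24]; [:: 2; 3; 25]; [:: 2; 3; 26]; [:: 2; 3; 27]; [:: 2; 3; 28]; [:: 2; 3; 29]; [:: 2; 4; 5]; [:: 2; 4; 7]; [:: 2; 5; 6]; [:: 2; 5; 7]; [:: 2; 5; 8]; [:: 2; 5; 9]; [:: 2; 5; 10]; [:: 2; 5; 11]; [:: 2; 5; 12]; [:: 2; 5; 13]; [:: 2; 5; 14]; [:: 2; 5; 15]; [:: 2; 5; 16]; [:: 2; 5; 17]; [:: 2; 5; 18]; [:: 2; 5; 19]; [:: 2; 5; 20]; [:: 2; 5; 21]; [:: 2; 5; 22]; [:: 2; 5; 23]; [:: 2; 5; 24]; [:: 2; 5; 25]; [:: 2; 5; 26]; [:: 2; 5; 27]; [:: 2; 5; 28]; [:: 2; 5; 29]]; [:: [:: 3; 4]; [:: 3; 4; 5]; [:: 3; 4; 6]; [:: 3; 4; 7]; [:: 3; 4; 8]; [:: 3; 4; 9]; [:: 3; 4; 10]; [:: 3; 4; 11]; [:: 3; 4; 12]; [:: 3; 4; 13]; [:: 3; 4; 14]; [:: 3; 4; 15]; [:: 3; 4; 16]; [:: 3;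 4; 17]; [:: 3; 4; 18]; [:: 3; 4; 19]; [:: 3; 4; 20]; [:: 3; 4; 21]; [:: 3; 4; 22]; [:: 3; 4; 23]; [:: 3; 4; 24]; [:: 3; 4; 25]; [:: 3; 4; 26]; [:: 3; 4; 27]; [:: 3; 4; 28]; [:: 3; 4; 29]; [:: 3; 5; 6]]; [:: [:: 4; 5]; [:: 4; 7]; [:: 4; 5; 6]; [:: 4; 5; 7]; [:: 4; 5; 8]; [:: 4; 5; 9]; [:: 4; 5; 10]; [:: 4; 5; 11]; [:: 4; 5; 12]; [:: 4; 5; 13]; [:: 4; 5; 14]; [:: 4; 5; 15]; [:: 4; 5; 16]; [:: 4; 5; 17]; [:: 4; 5; 18]; [:: 4; 5; 19]; [:: 4; 5; 20]; [:: 4; 5; 21]; [:: 4; 5; 22]; [:: 4; 5; 23]; [:: 4; 5; 24]; [:: 4; 5; 25]; [:: 4; 5; 26]; [:: 4; 5; 27]; [:: 4; 5; 28]; [:: 4; 5; 29]; [:: 4; 6; 7]; [:: 4; 7; 8]; [:: 4; 7; 9]; [:: 4; 7; 10]; [:: 4; 7; 11]; [:: 4; 7; 12]; [:: 4; 7; 13]; [:: 4; 7; 14]; [:: 4; 7; 15]; [:: 4; 7; 16]; [:: 4; 7; 17]; [:: 4; 7; 18]; [:: 4; 7; 19]; [:: 4; 7; 20]; [:: 4; 7; 21]; [:: 4; 7; 22]; [:: 4; 7; 23]; [:: 4; 7; 24]; [:: 4; 7; 25]; [:: 4; 7; 26]; [:: 4; 7; 27]; [:: 4; 7; 28]; [::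 4; 7; 29]]; [:: [:: 5; 6]; [:: 5; 6; 7]; [:: 5; 6; 8]; [:: 5; 6; 9]; [:: 5; 6; 10]; [:: 5; 6; 11]; [:: 5; 6; 12]; [:: 5; 6; 13]; [:: 5; 6; 14]; [:: 5; 6; 15]; [:: 5; 6; 16]; [:: 5; 6; 17]; [:: 5; 6; 18]; [:: 5; 6; 19]; [:: 5; 6; 20]; [:: 5; 6; 21]; [:: 5; 6; 22]; [:: 5; 6; 23]; [:: 5; 6; 24]; [:: 5; 6; 25]; [:: 5; 6; 26]; [:: 5; 6; 27]; [:: 5; 6; 28]; [:: 5; 6; 29]]; [::]; [::]; [::]; [::]; [::]; [::]; [::]; [::]; [::]; [::]; [::]; [::]; [::]; [::]; [::]; [::]; [::]; [::]; [::]; [::]; [::]; [::]; [::]; [::]; [::]];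
  [:: [:: [:: 0; 3; 4]; [:: 0; 4; 5]; [:: 0; 4; 7]; [:: 0; 5; 6]]; [:: [:: 1; 3; 4]; [:: 1; 4; 5]; [:: 1; 4; 7]; [:: 1; 5; 6]]; [::]; [:: [:: 3; 4]; [:: 3; 4; 5]; [:: 3; 4; 6]; [:: 3; 4; 7]; [:: 3; 4; 8]; [:: 3; 4; 9]; [:: 3; 4; 10]; [:: 3; 4; 11]; [:: 3; 4; 12]; [:: 3; 4; 13]; [:: 3; 4; 14]; [:: 3; 4; 15]; [:: 3; 4; 16]; [:: 3; 4; 17]; [:: 3; 4; 18]; [:: 3; 4; 19]; [:: 3; 4; 20]; [:: 3; 4; 21]; [:: 3; 4; 22]; [:: 3; 4; 23]; [:: 3; 4; 24]; [:: 3; 4; 25]; [:: 3; 4; 26]; [:: 3; 4; 27]; [:: 3; 4; 28]; [:: 3; 4; 29]; [:: 3; 5; 6]]; [:: [:: 4; 5]; [:: 4; 7]; [:: 4; 5; 6]; [:: 4; 5; 7]; [:: 4; 5; 8]; [:: 4; 5; 9]; [:: 4; 5; 10]; [:: 4; 5; 11]; [:: 4; 5; 12]; [:: 4; 5; 13]; [:: 4; 5; 14]; [:: 4; 5; 15]; [:: 4; 5; 16]; [:: 4; 5; 17]; [:: 4; 5; 18]; [:: 4; 5; 19]; [:: 4; 5; 20]; [:: 4; 5; 21]; [:: 4; 5; 22]; [:: 4; 5; 23]; [:: 4; 5; 24]; [:: 4; 5; 25]; [:: 4; 5; 26]; [:: 4; 5; 27]; [:: 4; 5; 28]; [:: 4;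 5; 29]; [:: 4; 6; 7]; [:: 4; 7; 8]; [:: 4; 7; 9]; [:: 4; 7; 10]; [:: 4; 7; 11]; [:: 4; 7; 12]; [:: 4; 7; 13]; [:: 4; 7; 14]; [:: 4; 7; 15]; [:: 4; 7; 16]; [:: 4; 7; 17]; [:: 4; 7; 18]; [:: 4; 7; 19]; [:: 4; 7; 20]; [:: 4; 7; 21]; [:: 4; 7; 22]; [:: 4; 7; 23]; [:: 4; 7; 24]; [:: 4; 7; 25]; [:: 4; 7; 26]; [:: 4; 7; 27]; [:: 4; 7; 28]; [:: 4; 7; 29]]; [:: [:: 5; 6]; [:: 5; 6; 7]; [:: 5; 6; 8]; [:: 5; 6; 9]; [:: 5; 6; 10]; [:: 5; 6; 11]; [:: 5; 6; 12]; [:: 5; 6; 13]; [:: 5; 6; 14]; [:: 5; 6; 15]; [:: 5; 6; 16]; [:: 5; 6; 17]; [:: 5; 6; 18]; [:: 5; 6; 19]; [:: 5; 6; 20]; [:: 5; 6; 21]; [:: 5; 6; 22]; [:: 5; 6; 23]; [:: 5; 6; 24]; [:: 5; 6; 25]; [:: 5; 6; 26]; [:: 5; 6; 27]; [:: 5; 6; 28]; [:: 5; 6; 29]]; [::]; [::]; [::]; [::]; [::]; [::]; [::]; [::]; [::]; [::]; [::]; [::]; [::]; [::]; [::]; [::]; [::]; [::]; [::]; [::]; [::]; [::]; [::]; [::]; [::]];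
  [:: [:: [:: 0; 2; 5]; [:: 0; 4; 5]; [:: 0; 4; 7]; [:: 0; 5; 6]]; [:: [:: 1; 2; 5]; [:: 1; 4; 5]; [:: 1; 4; 7]; [:: 1; 5; 6]]; [:: [:: 2; 5]; [:: 2; 4; 5]; [:: 2; 4; 7]; [:: 2; 5; 6]; [:: 2; 5; 7]; [:: 2; 5; 8]; [:: 2; 5; 9]; [:: 2; 5; 10]; [:: 2; 5; 11]; [:: 2; 5; 12]; [:: 2; 5; 13]; [:: 2; 5; 14]; [:: 2; 5; 15]; [:: 2; 5; 16]; [:: 2; 5; 17]; [:: 2; 5; 18]; [:: 2; 5; 19]; [:: 2; 5; 20]; [:: 2; 5; 21]; [:: 2; 5; 22]; [:: 2; 5; 23]; [:: 2; 5; 24]; [:: 2; 5; 25]; [:: 2; 5; 26]; [:: 2; 5; 27]; [:: 2; 5; 28]; [:: 2; 5; 29]]; [::]; [:: [:: 4; 5]; [:: 4; 7]; [:: 4; 5; 6]; [:: 4; 5; 7]; [:: 4; 5; 8]; [:: 4; 5; 9]; [:: 4; 5; 10]; [:: 4; 5; 11]; [:: 4; 5; 12]; [:: 4; 5; 13]; [:: 4; 5; 14]; [:: 4; 5; 15]; [:: 4; 5; 16]; [:: 4; 5; 17]; [:: 4; 5; 18]; [:: 4; 5; 19]; [:: 4; 5; 20]; [:: 4; 5; 21]; [:: 4; 5; 22]; [:: 4; 5; 23]; [:: 4; 5; 24]; [:: 4; 5; 25]; [:: 4; 5; 26]; [:: 4; 5; 27]; [:: 4; 5; 28]; [:: 4;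 5; 29]; [:: 4; 6; 7]; [:: 4; 7; 8]; [:: 4; 7; 9]; [:: 4; 7; 10]; [:: 4; 7; 11]; [:: 4; 7; 12]; [:: 4; 7; 13]; [:: 4; 7; 14]; [:: 4; 7; 15]; [:: 4; 7; 16]; [:: 4; 7; 17]; [:: 4; 7; 18]; [:: 4; 7; 19]; [:: 4; 7; 20]; [:: 4; 7; 21]; [:: 4; 7; 22]; [:: 4; 7; 23]; [:: 4; 7; 24]; [:: 4; 7; 25]; [:: 4; 7; 26]; [:: 4; 7; 27]; [:: 4; 7; 28]; [:: 4; 7; 29]]; [:: [:: 5; 6]; [:: 5; 6; 7]; [:: 5; 6; 8]; [:: 5; 6; 9]; [:: 5; 6; 10]; [:: 5; 6; 11]; [:: 5; 6; 12]; [:: 5; 6; 13]; [:: 5; 6; 14]; [:: 5; 6; 15]; [:: 5; 6; 16]; [:: 5; 6; 17]; [:: 5; 6; 18]; [:: 5; 6; 19]; [:: 5; 6; 20]; [:: 5; 6; 21]; [:: 5; 6; 22]; [:: 5; 6; 23]; [:: 5; 6; 24]; [:: 5; 6; 25]; [:: 5; 6; 26]; [:: 5; 6; 27]; [:: 5; 6; 28]; [:: 5; 6; 29]]; [::]; [::]; [::]; [::]; [::]; [::]; [::]; [::]; [::]; [::]; [::]; [::]; [::]; [::]; [::]; [::]; [::]; [::]; [::]; [::]; [::]; [::]; [::]; [::]; [::]];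
  [:: [:: [:: 0; 5; 6]; [:: 0; 6; 7]; [:: 0; 7; 8]]; [:: [:: 1; 5; 6]; [:: 1; 6; 7]; [:: 1; 7; 8]]; [:: [:: 2; 5; 6]; [:: 2; 6; 7]; [:: 2; 6; 9]; [:: 2; 7; 8]]; [:: [:: 3; 5; 6]; [:: 3; 6; 7]; [:: 3; 7; 8]]; [::]; [:: [:: 5; 6]; [:: 5; 6; 7]; [:: 5; 6; 8]; [:: 5; 6; 9]; [:: 5; 6; 10]; [:: 5; 6; 11]; [:: 5; 6; 12]; [:: 5; 6; 13]; [:: 5; 6; 14]; [:: 5; 6; 15]; [:: 5; 6; 16]; [:: 5; 6; 17]; [:: 5; 6; 18]; [:: 5; 6; 19]; [:: 5; 6; 20]; [:: 5; 6; 21]; [:: 5; 6; 22]; [:: 5; 6; 23]; [:: 5; 6; 24]; [:: 5; 6; 25]; [:: 5; 6; 26]; [:: 5; 6; 27]; [:: 5; 6; 28]; [:: 5; 6; 29]; [:: 5; 7; 8]]; [:: [:: 6; 7]; [:: 6; 7; 8]; [:: 6; 7; 9]; [:: 6; 7; 10]; [:: 6; 7; 11]; [:: 6; 7; 12]; [:: 6; 7; 13]; [:: 6; 7; 14]; [:: 6; 7; 15]; [:: 6; 7; 16]; [:: 6; 7; 17]; [:: 6; 7; 18]; [:: 6; 7; 19]; [:: 6; 7; 20]; [:: 6; 7; 21]; [:: 6; 7; 22]; [:: 6; 7; 23]; [:: 6; 7; 24]; [:: 6; 7; 25]; [:: 6; 7; 26]; [:: 6; 7; 27]; [:: 6; 7;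 28]; [:: 6; 7; 29]]; [:: [:: 7; 8]; [:: 7; 8; 9]; [:: 7; 8; 10]; [:: 7; 8; 11]; [:: 7; 8; 12]; [:: 7; 8; 13]; [:: 7; 8; 14]; [:: 7; 8; 15]; [:: 7; 8; 16]; [:: 7; 8; 17]; [:: 7; 8; 18]; [:: 7; 8; 19]; [:: 7; 8; 20]; [:: 7; 8; 21]; [:: 7; 8; 22]; [:: 7; 8; 23]; [:: 7; 8; 24]; [:: 7; 8; 25]; [:: 7; 8; 26]; [:: 7; 8; 27]; [:: 7; 8; 28]; [:: 7; 8; 29]]; [::]; [::]; [::]; [::]; [::]; [::]; [::]; [::]; [::]; [::]; [::]; [::]; [::]; [::]; [::]; [::]; [::]; [::]; [::]; [::]; [::]; [::]; [::]];
  [:: [:: [:: 0; 4; 7]; [:: 0; 6; 7]; [:: 0; 6; 9]]; [:: [:: 1; 4; 7]; [:: 1; 6; 7]; [:: 1; 6; 9]]; [:: [:: 2; 4; 7]; [:: 2; 6; 7]; [:: 2; 6; 9]]; [:: [:: 3; 4; 7]; [:: 3; 6; 7]; [:: 3; 6; 9]; [:: 3; 7; 8]]; [:: [:: 4; 7]; [:: 4; 6; 7]; [:: 4; 6; 9]; [:: 4; 7; 8]; [:: 4; 7; 9]; [:: 4; 7; 10]; [:: 4; 7; 11]; [:: 4; 7; 12]; [:: 4; 7; 13]; [:: 4; 7; 14]; [:: 4; 7; 15]; [:: 4; 7; 16]; [:: 4; 7; 17]; [:: 4; 7; 18]; [:: 4; 7; 19]; [:: 4; 7; 20]; [:: 4;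 7; 21]; [:: 4; 7; 22]; [:: 4; 7; 23]; [:: 4; 7; 24]; [:: 4; 7; 25]; [:: 4; 7; 26]; [:: 4; 7; 27]; [:: 4; 7; 28]; [:: 4; 7; 29]]; [::]; [:: [:: 6; 7]; [:: 6; 9]; [:: 6; 7; 8]; [:: 6; 7; 9]; [:: 6; 7; 10]; [:: 6; 7; 11]; [:: 6; 7; 12]; [:: 6; 7; 13]; [:: 6; 7; 14]; [:: 6; 7; 15]; [:: 6; 7; 16]; [:: 6; 7; 17]; [:: 6; 7; 18]; [:: 6; 7; 19]; [:: 6; 7; 20]; [:: 6; 7; 21]; [:: 6; 7; 22]; [:: 6; 7; 23]; [:: 6; 7; 24]; [:: 6; 7; 25]; [:: 6; 7; 26]; [:: 6; 7; 27]; [:: 6; 7; 28]; [:: 6; 7; 29]; [:: 6; 8; 9]; [:: 6; 9; 10]; [:: 6; 9; 11]; [:: 6; 9; 12]; [:: 6; 9; 13]; [:: 6; 9; 14]; [:: 6; 9; 15]; [:: 6; 9; 16]; [:: 6; 9; 17]; [:: 6; 9; 18]; [:: 6; 9; 19]; [:: 6; 9; 20]; [:: 6; 9; 21]; [:: 6; 9; 22]; [:: 6; 9; 23]; [:: 6; 9; 24]; [:: 6; 9; 25]; [:: 6; 9; 26]; [:: 6; 9; 27]; [:: 6; 9; 28]; [:: 6; 9; 29]]; [::]; [::]; [::]; [::]; [::]; [::]; [::]; [::]; [::]; [::]; [::]; [::]; [::]; [::]; [::]; [::]; [::]; [::]; [::]; [::]; [::]; [::]; [::]; [::]];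
  [:: [:: [:: 0; 7; 8]]; [:: [:: 1; 7; 8]]; [:: [:: 2; 7; 8]]; [:: [:: 3; 7; 8]]; [:: [:: 4; 7; 8]]; [:: [:: 5; 7; 8]]; [::]; [:: [:: 7; 8]; [:: 7; 8; 9]; [:: 7; 8; 10]; [:: 7; 8; 11]; [:: 7; 8; 12]; [:: 7; 8; 13]; [:: 7; 8; 14]; [:: 7; 8; 15]; [:: 7; 8; 16]; [:: 7; 8; 17]; [:: 7; 8; 18]; [:: 7; 8; 19]; [:: 7; 8; 20]; [:: 7; 8; 21]; [:: 7; 8; 22]; [:: 7; 8; 23]; [:: 7; 8; 24]; [:: 7; 8; 25]; [:: 7; 8; 26]; [:: 7; 8; 27]; [:: 7; 8; 28]; [:: 7; 8; 29]]; [::]; [::]; [::]; [::]; [::]; [::]; [::]; [::]; [::]; [::]; [::]; [::]; [::]; [::]; [::]; [::]; [::]; [::]; [::]; [::]; [::]; [::]; [::]];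
  [:: [:: [:: 0; 6; 9]]; [:: [:: 1; 6; 9]]; [:: [:: 2; 6; 9]]; [:: [:: 3; 6; 9]]; [:: [:: 4; 6; 9]]; [:: [:: 5; 6; 9]]; [:: [:: 6; 9]; [:: 6; 8; 9]; [:: 6; 9; 10]; [:: 6; 9; 11]; [:: 6; 9; 12]; [:: 6; 9; 13]; [:: 6; 9; 14]; [:: 6; 9; 15]; [:: 6; 9; 16]; [:: 6; 9; 17]; [:: 6; 9; 18]; [:: 6; 9; 19]; [:: 6; 9; 20]; [:: 6; 9; 21]; [:: 6; 9; 22]; [:: 6; 9; 23]; [:: 6; 9; 24]; [:: 6; 9; 25]; [:: 6; 9; 26]; [:: 6; 9; 27]; [:: 6; 9; 28]; [:: 6; 9; 29]]; [::]; [::]; [::]; [::]; [::]; [::]; [::]; [::]; [::]; [::]; [::]; [::]; [::]; [::]; [::]; [::]; [::]; [::]; [::]; [::]; [::]; [::]; [::]; [::]];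
  [:: [::]; [::]; [::]; [::]; [::]; [::]; [:: [:: 6; 9; 10]]; [::]; [::]; [::]; [::]; [::]; [::]; [::]; [::]; [::]; [::]; [::]; [::]; [::]; [::]; [::]; [::]; [::]; [::]; [::]; [::]; [::]; [::]; [::]; [::]];
  [:: [::]; [::]; [::]; [::]; [::]; [::]; [::]; [:: [:: 7; 8; 11]]; [::]; [::]; [::]; [::]; [::]; [::]; [::]; [::]; [::]; [::]; [::]; [::]; [::]; [::]; [::]; [::]; [::]; [::]; [::]; [::]; [::]; [::]; [::]];
  [:: [::]; [::]; [::]; [::]; [::]; [::]; [::]; [::]; [:: [:: 8; 11; 12]]; [::]; [::]; [::]; [::]; [::]; [::]; [::]; [::]; [::]; [::]; [::]; [::]; [::]; [::]; [::]; [::]; [::]; [::]; [::]; [::]; [::]; [::]];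
  [:: [::]; [::]; [::]; [::]; [::]; [::]; [::]; [::]; [::]; [:: [:: 9; 10; 13]]; [::]; [::]; [::]; [::]; [::]; [::]; [::]; [::]; [::]; [::]; [::]; [::]; [::]; [::]; [::]; [::]; [::]; [::]; [::]; [::]; [::]];
  [:: [::]; [::]; [::]; [::]; [::]; [::]; [::]; [::]; [::]; [::]; [:: [:: 10; 13; 14]]; [::]; [::]; [::]; [::]; [::]; [::]; [::]; [::]; [::]; [::]; [::]; [::]; [::]; [::]; [::]; [::]; [::]; [::]; [::]; [::]];
  [:: [::]; [::]; [::]; [::]; [::]; [::]; [::]; [::]; [::]; [::]; [::]; [:: [:: 11; 12; 15]]; [::]; [::]; [::]; [::]; [::]; [::]; [::]; [::]; [::]; [::]; [::]; [::]; [::]; [::]; [::]; [::]; [::]; [::]; [::]];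
  [:: [::]; [::]; [::]; [::]; [::]; [::]; [::]; [::]; [::]; [::]; [::]; [::]; [:: [:: 12; 15; 16]]; [::]; [::]; [::]; [::]; [::]; [::]; [::]; [::]; [::]; [::]; [::]; [::]; [::]; [::]; [::]; [::]; [::]; [::]];
  [:: [::]; [::]; [::]; [::]; [::]; [::]; [::]; [::]; [::]; [::]; [::]; [::]; [::]; [:: [:: 13; 14; 17]]; [::]; [::]; [::]; [::]; [::]; [::]; [::]; [::]; [::]; [::]; [::]; [::]; [::]; [::]; [::]; [::]; [::]];
  [:: [::]; [::]; [::]; [::]; [::]; [::]; [::]; [::]; [::]; [::]; [::]; [::]; [::]; [::]; [:: [:: 14; 17; 18]]; [::]; [::]; [::]; [::]; [::]; [::]; [::]; [::]; [::]; [::]; [::]; [::]; [::]; [::]; [::]; [::]];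
  [:: [::]; [::]; [::]; [::]; [::]; [::]; [::]; [::]; [::]; [::]; [::]; [::]; [::]; [::]; [::]; [:: [:: 15; 16; 19]]; [::]; [::]; [::]; [::]; [::]; [::]; [::]; [::]; [::]; [::]; [::]; [::]; [::]; [::]; [::]];
  [:: [::]; [::]; [::]; [::]; [::]; [::]; [::]; [::]; [::]; [::]; [::]; [::]; [::]; [::]; [::]; [::]; [:: [:: 16; 19; 20]]; [::]; [::]; [::]; [::]; [::]; [::]; [::]; [::]; [::]; [::]; [::]; [::]; [::]; [::]];
  [:: [::]; [::]; [::]; [::]; [::]; [::]; [::]; [::]; [::]; [::]; [::]; [::]; [::]; [::]; [::]; [::]; [::]; [:: [:: 17; 18; 21]]; [::]; [::]; [::]; [::]; [::]; [::]; [::]; [::]; [::]; [::]; [::]; [::]; [::]];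
  [:: [::]; [::]; [::]; [::]; [::]; [::]; [::]; [::]; [::]; [::]; [::]; [::]; [::]; [::]; [::]; [::]; [::]; [::]; [:: [:: 18; 21; 22]]; [::]; [::]; [::]; [::]; [::]; [::]; [::]; [::]; [::]; [::]; [::]; [::]];
  [:: [::]; [::]; [::]; [::]; [::]; [::]; [::]; [::]; [::]; [::]; [::]; [::]; [::]; [::]; [::]; [::]; [::]; [::]; [::]; [:: [:: 19; 20; 23]]; [::]; [::]; [::]; [::]; [::]; [::]; [::]; [::]; [::]; [::]; [::]];
  [:: [:: [:: 0; 20; 23]]; [:: [:: 1; 20; 23]]; [:: [:: 2; 20; 23]]; [:: [:: 3; 20; 23]]; [:: [:: 4; 20; 23]]; [:: [:: 5; 20; 23]]; [:: [:: 6; 20; 23]]; [:: [:: 7; 20; 23]]; [:: [:: 8; 20; 23]]; [:: [:: 9; 20; 23]]; [:: [:: 10; 20; 23]]; [:: [:: 11; 20; 23]]; [:: [:: 12; 20; 23]]; [:: [:: 13; 20; 23]]; [:: [:: 14; 20; 23]]; [:: [:: 15; 20; 23]]; [:: [:: 16; 20; 23]]; [:: [:: 17; 20; 23]]; [:: [:: 18; 20; 23]]; [:: [:: 19; 20; 23]]; [:: [:: 20; 23]; [:: 20; 21; 23]; [:: 20; 23; 24]; [:: 20; 23; 25]; [:: 20; 23; 26]; [:: 20; 23; 27]; [:: 20; 23; 28]; [:: 20; 23; 29]]; [::]; [::]; [::]; [::]; [::]; [::]; [::]; [::]; [::]; [::]];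
  [:: [:: [:: 0; 21; 22]]; [:: [:: 1; 21; 22]]; [:: [:: 2; 21; 22]]; [:: [:: 3; 21; 22]]; [:: [:: 4; 21; 22]]; [:: [:: 5; 21; 22]]; [:: [:: 6; 21; 22]]; [:: [:: 7; 21; 22]]; [:: [:: 8; 21; 22]]; [:: [:: 9; 21; 22]]; [:: [:: 10; 21; 22]]; [:: [:: 11; 21; 22]]; [:: [:: 12; 21; 22]]; [:: [:: 13; 21; 22]]; [:: [:: 14; 21; 22]]; [:: [:: 15; 21; 22]]; [:: [:: 16; 21; 22]]; [:: [:: 17; 21; 22]]; [:: [:: 18; 21; 22]]; [:: [:: 19; 21; 22]]; [:: [:: 20; 21; 22]]; [:: [:: 21; 22]; [:: 21; 22; 24]; [:: 21; 22; 25]; [:: 21; 22; 26]; [:: 21; 22; 27]; [:: 21; 22; 28]; [:: 21; 22; 29]]; [::]; [::]; [::]; [::]; [::]; [::]; [::]; [::]; [::]];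
  [:: [:: [:: 0; 20; 23]; [:: 0; 22; 23]; [:: 0; 22; 25]]; [:: [:: 1; 20; 23]; [:: 1; 22; 23]; [:: 1; 22; 25]]; [:: [:: 2; 20; 23]; [:: 2; 22; 23]; [:: 2; 22; 25]]; [:: [:: 3; 20; 23]; [:: 3; 22; 23]; [:: 3; 22; 25]]; [:: [:: 4; 20; 23]; [:: 4; 22; 23]; [:: 4; 22; 25]]; [:: [:: 5; 20; 23]; [:: 5; 22; 23]; [:: 5; 22; 25]]; [:: [:: 6; 20; 23]; [:: 6; 22; 23]; [:: 6; 22; 25]]; [:: [:: 7; 20; 23]; [:: 7; 22; 23]; [:: 7; 22; 25]]; [:: [:: 8; 20; 23]; [:: 8; 22; 23]; [:: 8; 22; 25]]; [:: [:: 9; 20; 23]; [:: 9; 22; 23]; [:: 9; 22; 25]]; [:: [:: 10; 20; 23]; [:: 10; 22; 23]; [:: 10; 22; 25]]; [:: [:: 11; 20; 23]; [:: 11; 22; 23]; [:: 11; 22; 25]]; [:: [:: 12; 20; 23]; [:: 12; 22; 23]; [:: 12; 22; 25]]; [:: [:: 13; 20; 23]; [:: 13; 22; 23]; [:: 13; 22; 25]]; [:: [:: 14; 20; 23]; [:: 14; 22; 23]; [:: 14; 22; 25]]; [:: [:: 15; 20; 23]; [:: 15; 22; 23]; [:: 15; 22; 25]]; [:: [:: 16; 20; 23]; [:: 16; 22; 23]; [:: 16; 22; 25]]; [:: [:: 17; 20; 23]; [:: 17; 22; 23]; [:: 17; 22; 25]]; [:: [:: 18; 20; 23]; [:: 18;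 22; 23]; [:: 18; 22; 25]]; [:: [:: 19; 20; 23]; [:: 19; 22; 23]; [:: 19; 22; 25]]; [:: [:: 20; 23]; [:: 20; 21; 23]; [:: 20; 22; 23]; [:: 20; 22; 25]; [:: 20; 23; 25]; [:: 20; 23; 26]; [:: 20; 23; 27]; [:: 20; 23; 28]; [:: 20; 23; 29]]; [:: [:: 21; 22; 23]; [:: 21; 22; 25]; [:: 21; 22; 26]]; [:: [:: 22; 23]; [:: 22; 25]; [:: 22; 23; 25]; [:: 22; 23; 26]; [:: 22; 23; 27]; [:: 22; 23; 28]; [:: 22; 23; 29]; [:: 22; 25; 26]; [:: 22; 25; 27]; [:: 22; 25; 28]; [:: 22; 25; 29]]; [::]; [::]; [::]; [::]; [::]; [::]; [::]; [::]];
  [:: [:: [:: 0; 21; 22]; [:: 0; 22; 23]; [:: 0; 23; 24]]; [:: [:: 1; 21; 22]; [:: 1; 22; 23]; [:: 1; 23; 24]]; [:: [:: 2; 21; 22]; [:: 2; 22; 23]; [:: 2; 23; 24]]; [:: [:: 3; 21; 22]; [:: 3; 22; 23]; [:: 3; 23; 24]]; [:: [:: 4; 21; 22]; [:: 4; 22; 23]; [:: 4; 23; 24]]; [:: [:: 5; 21; 22]; [:: 5; 22; 23]; [:: 5; 23; 24]]; [:: [:: 6; 21; 22]; [:: 6; 22; 23]; [:: 6; 23; 24]]; [:: [:: 7; 21; 22]; [:: 7; 22; 23]; [:: 7; 23; 24]]; [:: [:: 8; 21; 22]; [:: 8; 22; 23]; [:: 8; 23; 24]]; [:: [:: 9; 21;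 22]; [:: 9; 22; 23]; [:: 9; 23; 24]]; [:: [:: 10; 21; 22]; [:: 10; 22; 23]; [:: 10; 23; 24]]; [:: [:: 11; 21; 22]; [:: 11; 22; 23]; [:: 11; 23; 24]]; [:: [:: 12; 21; 22]; [:: 12; 22; 23]; [:: 12; 23; 24]]; [:: [:: 13; 21; 22]; [:: 13; 22; 23]; [:: 13; 23; 24]]; [:: [:: 14; 21; 22]; [:: 14; 22; 23]; [:: 14; 23; 24]]; [:: [:: 15; 21; 22]; [:: 15; 22; 23]; [:: 15; 23; 24]]; [:: [:: 16; 21; 22]; [:: 16; 22; 23]; [:: 16; 23; 24]]; [:: [:: 17; 21; 22]; [:: 17; 22; 23]; [:: 17; 23; 24]]; [:: [:: 18; 21; 22]; [:: 18; 22; 23]; [:: 18; 23; 24]]; [:: [:: 19; 21; 22]; [:: 19; 22; 23]; [:: 19; 23; 24]]; [:: [:: 20; 21; 22]; [:: 20; 22; 23]; [:: 20; 23; 24]; [:: 20; 23; 27]]; [:: [:: 21; 22]; [:: 21; 22; 23]; [:: 21; 22; 24]; [:: 21; 22; 26]; [:: 21; 22; 27]; [:: 21; 22; 28]; [:: 21; 22; 29]; [:: 21; 23; 24]]; [:: [:: 22; 23]; [:: 22; 23; 24]; [:: 22; 23; 26]; [:: 22; 23; 27]; [:: 22; 23; 28]; [:: 22; 23; 29]]; [:: [:: 23; 24]; [:: 23; 24; 26]; [:: 23; 24; 27]; [:: 23; 24; 28]; [:: 23; 24; 29]]; [::]; [::]; [::]; [::]; [::]; [::]; [::]];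
  [:: [:: [:: 0; 22; 25]; [:: 0; 23; 24]; [:: 0; 24; 25]; [:: 0; 24; 27]]; [:: [:: 1; 22; 25]; [:: 1; 23; 24]; [:: 1; 24; 25]; [:: 1; 24; 27]]; [:: [:: 2; 22; 25]; [:: 2; 23; 24]; [:: 2; 24; 25]; [:: 2; 24; 27]]; [:: [:: 3; 22; 25]; [:: 3; 23; 24]; [:: 3; 24; 25]; [:: 3; 24; 27]]; [:: [:: 4; 22; 25]; [:: 4; 23; 24]; [:: 4; 24; 25]; [:: 4; 24; 27]]; [:: [:: 5; 22; 25]; [:: 5; 23; 24]; [:: 5; 24; 25]; [:: 5; 24; 27]]; [:: [:: 6; 22; 25]; [:: 6; 23; 24]; [:: 6; 24; 25]; [:: 6; 24; 27]]; [:: [:: 7; 22; 25]; [:: 7; 23; 24]; [:: 7; 24; 25]; [:: 7; 24; 27]]; [:: [:: 8; 22; 25]; [:: 8; 23; 24]; [:: 8; 24; 25]; [:: 8; 24; 27]]; [:: [:: 9; 22; 25]; [:: 9; 23; 24]; [:: 9; 24; 25]; [:: 9; 24; 27]]; [:: [:: 10; 22; 25]; [:: 10; 23; 24]; [:: 10; 24; 25]; [:: 10; 24; 27]]; [:: [:: 11; 22; 25]; [:: 11; 23; 24]; [:: 11; 24; 25]; [:: 11; 24; 27]]; [:: [:: 12; 22; 25]; [:: 12; 23; 24]; [:: 12; 24; 25]; [:: 12; 24; 27]]; [:: [:: 13; 22; 25]; [:: 13; 23; 24]; [:: 13; 24; 25]; [:: 13; 24; 27]]; [:: [:: 14; 22;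 25]; [:: 14; 23; 24]; [:: 14; 24; 25]; [:: 14; 24; 27]]; [:: [:: 15; 22; 25]; [:: 15; 23; 24]; [:: 15; 24; 25]; [:: 15; 24; 27]]; [:: [:: 16; 22; 25]; [:: 16; 23; 24]; [:: 16; 24; 25]; [:: 16; 24; 27]]; [:: [:: 17; 22; 25]; [:: 17; 23; 24]; [:: 17; 24; 25]; [:: 17; 24; 27]]; [:: [:: 18; 22; 25]; [:: 18; 23; 24]; [:: 18; 24; 25]; [:: 18; 24; 27]]; [:: [:: 19; 22; 25]; [:: 19; 23; 24]; [:: 19; 24; 25]; [:: 19; 24; 27]]; [:: [:: 20; 22; 25]; [:: 20; 23; 24]; [:: 20; 24; 25]; [:: 20; 24; 27]]; [:: [:: 21; 22; 25]; [:: 21; 23; 24]; [:: 21; 24; 25]; [:: 21; 24; 27]]; [:: [:: 22; 25]; [:: 22; 23; 24]; [:: 22; 23; 25]; [:: 22; 24; 25]; [:: 22; 24; 27]; [:: 22; 25; 27]; [:: 22; 25; 28]; [:: 22; 25; 29]]; [:: [:: 23; 24]; [:: 23; 24; 25]; [:: 23; 24; 27]; [:: 23; 24; 28]; [:: 23; 24; 29]]; [:: [:: 24; 25]; [:: 24; 27]; [:: 24; 25; 27]; [:: 24; 25; 28]; [:: 24; 25; 29]; [:: 24; 27; 28]; [:: 24; 27; 29]]; [::]; [::]; [::]; [::]; [::]; [::]];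
  [:: [:: [:: 0; 22; 25]; [:: 0; 23; 24]; [:: 0; 24; 25]; [:: 0; 25; 26]]; [:: [:: 1; 22; 25]; [:: 1; 23; 24]; [:: 1; 24; 25]; [:: 1; 25; 26]]; [:: [:: 2; 22; 25]; [:: 2; 23; 24]; [:: 2; 24; 25]; [:: 2; 25; 26]]; [:: [:: 3; 22; 25]; [:: 3; 23; 24]; [:: 3; 24; 25]; [:: 3; 25; 26]]; [:: [:: 4; 22; 25]; [:: 4; 23; 24]; [:: 4; 24; 25]; [:: 4; 25; 26]]; [:: [:: 5; 22; 25]; [:: 5; 23; 24]; [:: 5; 24; 25]; [:: 5; 25; 26]]; [:: [:: 6; 22; 25]; [:: 6; 23; 24]; [:: 6; 24; 25]; [:: 6; 25; 26]]; [:: [:: 7; 22; 25]; [:: 7; 23; 24]; [:: 7; 24; 25]; [:: 7; 25; 26]]; [:: [:: 8; 22; 25]; [:: 8; 23; 24]; [:: 8; 24; 25]; [:: 8; 25; 26]]; [:: [:: 9; 22; 25]; [:: 9; 23; 24]; [:: 9; 24; 25]; [:: 9; 25; 26]]; [:: [:: 10; 22; 25]; [:: 10; 23; 24]; [:: 10; 24; 25]; [:: 10; 25; 26]]; [:: [:: 11; 22; 25]; [:: 11; 23; 24]; [:: 11; 24; 25]; [:: 11; 25; 26]]; [:: [:: 12; 22; 25]; [:: 12; 23; 24]; [:: 12; 24; 25]; [:: 12; 25; 26]]; [:: [:: 13; 22; 25]; [:: 13; 23; 24]; [:: 13; 24; 25]; [:: 13; 25; 26]]; [:: [:: 14; 22;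 25]; [:: 14; 23; 24]; [:: 14; 24; 25]; [:: 14; 25; 26]]; [:: [:: 15; 22; 25]; [:: 15; 23; 24]; [:: 15; 24; 25]; [:: 15; 25; 26]]; [:: [:: 16; 22; 25]; [:: 16; 23; 24]; [:: 16; 24; 25]; [:: 16; 25; 26]]; [:: [:: 17; 22; 25]; [:: 17; 23; 24]; [:: 17; 24; 25]; [:: 17; 25; 26]]; [:: [:: 18; 22; 25]; [:: 18; 23; 24]; [:: 18; 24; 25]; [:: 18; 25; 26]]; [:: [:: 19; 22; 25]; [:: 19; 23; 24]; [:: 19; 24; 25]; [:: 19; 25; 26]]; [:: [:: 20; 22; 25]; [:: 20; 23; 24]; [:: 20; 24; 25]; [:: 20; 25; 26]]; [:: [:: 21; 22; 25]; [:: 21; 23; 24]; [:: 21; 24; 25]; [:: 21; 25; 26]]; [:: [:: 22; 25]; [:: 22; 23; 24]; [:: 22; 23; 25]; [:: 22; 24; 25]; [:: 22; 25; 26]; [:: 22; 25; 28]; [:: 22; 25; 29]]; [:: [:: 23; 24]; [:: 23; 24; 25]; [:: 23; 24; 26]; [:: 23; 24; 28]; [:: 23; 24; 29]; [:: 23; 25; 26]]; [:: [:: 24; 25]; [:: 24; 25; 26]; [:: 24; 25; 28]; [:: 24; 25; 29]]; [:: [:: 25; 26]; [:: 25; 26; 28]; [:: 25; 26; 29]]; [::]; [::]; [::]; [::]; [::]];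
  [:: [:: [:: 0; 22; 25]; [:: 0; 23; 24]; [:: 0; 24; 25]; [:: 0; 24; 27]; [:: 0; 25; 26]; [:: 0; 26; 27]; [:: 0; 26; 29]]; [:: [:: 1; 22; 25]; [:: 1; 23; 24]; [:: 1; 24; 25]; [:: 1; 24; 27]; [:: 1; 25; 26]; [:: 1; 26; 27]; [:: 1; 26; 29]]; [:: [:: 2; 22; 25]; [:: 2; 23; 24]; [:: 2; 24; 25]; [:: 2; 24; 27]; [:: 2; 25; 26]; [:: 2; 26; 27]; [:: 2; 26; 29]]; [:: [:: 3; 22; 25]; [:: 3; 23; 24]; [:: 3; 24; 25]; [:: 3; 24; 27]; [:: 3; 25; 26]; [:: 3; 26; 27]; [:: 3; 26; 29]]; [:: [:: 4; 22; 25]; [:: 4; 23; 24]; [:: 4; 24; 25]; [:: 4; 24; 27]; [:: 4; 25; 26]; [:: 4; 26; 27]; [:: 4; 26; 29]]; [:: [:: 5; 22; 25]; [:: 5; 23; 24]; [:: 5; 24; 25]; [:: 5; 24; 27]; [:: 5; 25; 26]; [:: 5; 26; 27]; [:: 5; 26; 29]]; [:: [:: 6; 22; 25]; [:: 6; 23; 24]; [:: 6; 24; 25]; [:: 6; 24; 27]; [:: 6; 25; 26]; [:: 6; 26; 27]; [:: 6; 26; 29]]; [:: [:: 7; 22; 25]; [:: 7; 23; 24]; [:: 7; 24; 25]; [:: 7; 24; 27]; [:: 7; 25; 26]; [:: 7; 26; 27]; [:: 7; 26; 29]]; [:: [:: 8; 22; 25]; [:: 8; 23; 24]; [:: 8;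 24; 25]; [:: 8; 24; 27]; [:: 8; 25; 26]; [:: 8; 26; 27]; [:: 8; 26; 29]]; [:: [:: 9; 22; 25]; [:: 9; 23; 24]; [:: 9; 24; 25]; [:: 9; 24; 27]; [:: 9; 25; 26]; [:: 9; 26; 27]; [:: 9; 26; 29]]; [:: [:: 10; 22; 25]; [:: 10; 23; 24]; [:: 10; 24; 25]; [:: 10; 24; 27]; [:: 10; 25; 26]; [:: 10; 26; 27]; [:: 10; 26; 29]]; [:: [:: 11; 22; 25]; [:: 11; 23; 24]; [:: 11; 24; 25]; [:: 11; 24; 27]; [:: 11; 25; 26]; [:: 11; 26; 27]; [:: 11; 26; 29]]; [:: [:: 12; 22; 25]; [:: 12; 23; 24]; [:: 12; 24; 25]; [:: 12; 24; 27]; [:: 12; 25; 26]; [:: 12; 26; 27]; [:: 12; 26; 29]]; [:: [:: 13; 22; 25]; [:: 13; 23; 24]; [:: 13; 24; 25]; [:: 13; 24; 27]; [:: 13; 25; 26]; [:: 13; 26; 27]; [:: 13; 26; 29]]; [:: [:: 14; 22; 25]; [:: 14; 23; 24]; [:: 14; 24; 25]; [:: 14; 24; 27]; [:: 14; 25; 26]; [:: 14; 26; 27]; [:: 14; 26; 29]]; [:: [:: 15; 22; 25]; [:: 15; 23; 24]; [:: 15; 24; 25]; [:: 15; 24; 27]; [:: 15; 25; 26]; [:: 15; 26; 27]; [:: 15; 26; 29]]; [:: [:: 16; 22; 25]; [:: 16; 23; 24]; [:: 16; 24; 25]; [:: 16; 24; 27]; [:: 16; 25; 26]; [:: 16; 26;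 27]; [:: 16; 26; 29]]; [:: [:: 17; 22; 25]; [:: 17; 23; 24]; [:: 17; 24; 25]; [:: 17; 24; 27]; [:: 17; 25; 26]; [:: 17; 26; 27]; [:: 17; 26; 29]]; [:: [:: 18; 22; 25]; [:: 18; 23; 24]; [:: 18; 24; 25]; [:: 18; 24; 27]; [:: 18; 25; 26]; [:: 18; 26; 27]; [:: 18; 26; 29]]; [:: [:: 19; 22; 25]; [:: 19; 23; 24]; [:: 19; 24; 25]; [:: 19; 24; 27]; [:: 19; 25; 26]; [:: 19; 26; 27]; [:: 19; 26; 29]]; [:: [:: 20; 22; 25]; [:: 20; 23; 24]; [:: 20; 24; 25]; [:: 20; 24; 27]; [:: 20; 25; 26]; [:: 20; 26; 27]; [:: 20; 26; 29]]; [:: [:: 21; 22; 25]; [:: 21; 23; 24]; [:: 21; 24; 25]; [:: 21; 24; 27]; [:: 21; 25; 26]; [:: 21; 26; 27]; [:: 21; 26; 29]]; [:: [:: 22; 25]; [:: 22; 23; 24]; [:: 22; 23; 25]; [:: 22; 24; 25]; [:: 22; 24; 27]; [:: 22; 25; 26]; [:: 22; 25; 27]; [:: 22; 25; 29]; [:: 22; 26; 27]; [:: 22; 26; 29]]; [:: [:: 23; 24]; [:: 23; 24; 25]; [:: 23; 24; 26]; [:: 23; 24; 27]; [:: 23; 24; 29]; [:: 23; 25; 26]; [:: 23; 26; 27]; [:: 23; 26; 29]]; [:: [:: 24; 25]; [:: 24; 27]; [:: 24; 25; 26]; [:: 24; 25; 27]; [:: 24; 25; 29]; [:: 24; 26;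 27]; [:: 24; 26; 29]; [:: 24; 27; 29]]; [:: [:: 25; 26]; [:: 25; 26; 27]; [:: 25; 26; 29]]; [:: [:: 26; 27]; [:: 26; 29]; [:: 26; 27; 29]]; [::]; [::]; [::]; [::]];
  [:: [:: [:: 0; 22; 25]; [:: 0; 23; 24]; [:: 0; 24; 25]; [:: 0; 24; 27]; [:: 0; 25; 26]; [:: 0; 26; 27]; [:: 0; 27; 28]]; [:: [:: 1; 22; 25]; [:: 1; 23; 24]; [:: 1; 24; 25]; [:: 1; 24; 27]; [:: 1; 25; 26]; [:: 1; 26; 27]; [:: 1; 27; 28]]; [:: [:: 2; 22; 25]; [:: 2; 23; 24]; [:: 2; 24; 25]; [:: 2; 24; 27]; [:: 2; 25; 26]; [:: 2; 26; 27]; [:: 2; 27; 28]]; [:: [:: 3; 22; 25]; [:: 3; 23; 24]; [:: 3; 24; 25]; [:: 3; 24; 27]; [:: 3; 25; 26]; [:: 3; 26; 27]; [:: 3; 27; 28]]; [:: [:: 4; 22; 25]; [:: 4; 23; 24]; [:: 4; 24; 25]; [:: 4; 24; 27]; [:: 4; 25; 26]; [:: 4; 26; 27]; [:: 4; 27; 28]]; [:: [:: 5; 22; 25]; [:: 5; 23; 24]; [:: 5; 24; 25]; [:: 5; 24; 27]; [:: 5; 25; 26]; [:: 5; 26; 27]; [:: 5; 27; 28]]; [:: [:: 6; 22; 25]; [:: 6; 23; 24]; [:: 6; 24; 25]; [:: 6; 24; 27]; [:: 6; 25; 26]; [:: 6; 26; 27]; [:: 6; 27; 28]]; [:: [:: 7;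 22; 25]; [:: 7; 23; 24]; [:: 7; 24; 25]; [:: 7; 24; 27]; [:: 7; 25; 26]; [:: 7; 26; 27]; [:: 7; 27; 28]]; [:: [:: 8; 22; 25]; [:: 8; 23; 24]; [:: 8; 24; 25]; [:: 8; 24; 27]; [:: 8; 25; 26]; [:: 8; 26; 27]; [:: 8; 27; 28]]; [:: [:: 9; 22; 25]; [:: 9; 23; 24]; [:: 9; 24; 25]; [:: 9; 24; 27]; [:: 9; 25; 26]; [:: 9; 26; 27]; [:: 9; 27; 28]]; [:: [:: 10; 22; 25]; [:: 10; 23; 24]; [:: 10; 24; 25]; [:: 10; 24; 27]; [:: 10; 25; 26]; [:: 10; 26; 27]; [:: 10; 27; 28]]; [:: [:: 11; 22; 25]; [:: 11; 23; 24]; [:: 11; 24; 25]; [:: 11; 24; 27]; [:: 11; 25; 26]; [:: 11; 26; 27]; [:: 11; 27; 28]]; [:: [:: 12; 22; 25]; [:: 12; 23; 24]; [:: 12; 24; 25]; [:: 12; 24; 27]; [:: 12; 25; 26]; [:: 12; 26; 27]; [:: 12; 27; 28]]; [:: [:: 13; 22; 25]; [:: 13; 23; 24]; [:: 13; 24; 25]; [:: 13; 24; 27]; [:: 13; 25; 26]; [:: 13; 26; 27]; [:: 13; 27; 28]]; [:: [:: 14; 22; 25]; [:: 14; 23; 24]; [:: 14; 24; 25]; [:: 14; 24; 27]; [:: 14; 25; 26]; [:: 14; 26; 27]; [:: 14; 27; 28]]; [:: [:: 15; 22; 25]; [:: 15; 23; 24]; [:: 15; 24; 25]; [:: 15; 24;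 27]; [:: 15; 25; 26]; [:: 15; 26; 27]; [:: 15; 27; 28]]; [:: [:: 16; 22; 25]; [:: 16; 23; 24]; [:: 16; 24; 25]; [:: 16; 24; 27]; [:: 16; 25; 26]; [:: 16; 26; 27]; [:: 16; 27; 28]]; [:: [:: 17; 22; 25]; [:: 17; 23; 24]; [:: 17; 24; 25]; [:: 17; 24; 27]; [:: 17; 25; 26]; [:: 17; 26; 27]; [:: 17; 27; 28]]; [:: [:: 18; 22; 25]; [:: 18; 23; 24]; [:: 18; 24; 25]; [:: 18; 24; 27]; [:: 18; 25; 26]; [:: 18; 26; 27]; [:: 18; 27; 28]]; [:: [:: 19; 22; 25]; [:: 19; 23; 24]; [:: 19; 24; 25]; [:: 19; 24; 27]; [:: 19; 25; 26]; [:: 19; 26; 27]; [:: 19; 27; 28]]; [:: [:: 20; 22; 25]; [:: 20; 23; 24]; [:: 20; 24; 25]; [:: 20; 24; 27]; [:: 20; 25; 26]; [:: 20; 26; 27]; [:: 20; 27; 28]]; [:: [:: 21; 22; 25]; [:: 21; 23; 24]; [:: 21; 24; 25]; [:: 21; 24; 27]; [:: 21; 25; 26]; [:: 21; 26; 27]; [:: 21; 27; 28]]; [:: [:: 22; 25]; [:: 22; 23; 24]; [:: 22; 23; 25]; [:: 22; 24; 25]; [:: 22; 24; 27]; [:: 22; 25; 26]; [:: 22; 25; 27]; [:: 22; 25; 28]; [:: 22; 26; 27]; [:: 22; 27; 28]]; [:: [:: 23; 24]; [:: 23; 24; 25]; [:: 23; 24; 26]; [:: 23; 24; 27]; [:: 23;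 24; 28]; [:: 23; 25; 26]; [:: 23; 26; 27]; [:: 23; 27; 28]]; [:: [:: 24; 25]; [:: 24; 27]; [:: 24; 25; 26]; [:: 24; 25; 27]; [:: 24; 25; 28]; [:: 24; 26; 27]; [:: 24; 27; 28]]; [:: [:: 25; 26]; [:: 25; 26; 27]; [:: 25; 26; 28]; [:: 25; 27; 28]]; [:: [:: 26; 27]; [:: 26; 27; 28]]; [:: [:: 27; 28]]; [::]; [::]; [::]]].
Definition nbl : seq (seq nat) := [:: [:: 1; 2]; [:: 0; 3]; [:: 0; 3; 4]; [:: 1; 2; 5]; [:: 2; 5; 6]; [:: 3; 4; 7]; [:: 4; 7; 8]; [:: 5; 6; 9]; [:: 6; 9; 10]; [:: 7; 8; 11]; [:: 8; 11; 12]; [:: 9; 10; 13]; [:: 10; 13; 14]; [:: 11; 12; 15]; [:: 12; 15; 16]; [:: 13; 14; 17]; [:: 14; 17; 18]; [:: 15; 16; 19]; [:: 16; 19; 20]; [:: 17; 18; 21]; [:: 18; 21; 22]; [:: 19; 20; 23]; [:: 20; 23; 24]; [:: 21; 22; 25]; [:: 22; 25; 26]; [:: 23; 24; 27]; [:: 24; 27; 28]; [:: 25; 26; 29]; [:: 26; 29]; [:: 27; 28]].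

Definition T := ('I_15 * bool)%type.
Definition enc (x : T) : nat := (val x.1).*2 + x.2.
Definition ordn (m : nat) : 'I_15 :=
  (if m < 15 as b return (m < 15 = b -> 'I_15) then fun H => @Ordinal 15 m H
   else fun _ => ord0) (erefl (m < 15)).
Lemma val_ordn m : m < 15 -> val (ordn m) = m.
Proof.
move=> H; rewrite /ordn; move: (erefl (m < 15)).
by case: {2 3}(m < 15) => // e; rewrite H in e.
Qed.
Definition dec (n : nat) : T := (ordn n./2, odd n).

Definition goodb (s : seq nat) (x : nat) : bool :=
  [&& x \notin s, size s <= 3 & s \notin nth [::] (nth [::] badtab x) (head 30 s)].
Definition ins (x : nat) (s : seq nat) := sort leq (x :: s).
Definition escape (s : seq nat) (x : nat) :=
  has (fun w => (w \notin s) && goodb s w) (nth [::] nbl x).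
Definition chk (s : seq nat) (x : nat) : bool :=
  if goodb s x then
    if escape s x then
      if (if size s < 3 then escape (ins x s) x else true) then
        all (fun u => escape (ins x (rem u s)) x) s
      else false
    else false
  else true.
Definition chkall : bool :=
  all (chk [::]) (iota 0 30) &&
  all (fun a => all (chk [:: a]) (iota 0 30) &&
    all (fun b => if a < b then (all (chk [:: a; b]) (iota 0 30) &&
      all (fun c => if b < c then all (chk [:: a; b; c]) (iota 0 30) else true) (iota 0 30)) else true)
      (iota 0 30)) (iota 0 30).

Lemma chkall_ok : chkall.
Proof. vm_compute. reflexivity. Qed.

Lemma encK : cancel enc dec.
Proof.
case=> i b; rewrite /enc /dec /=; congr (_, _).
  by apply: val_inj; rewrite /= addnC half_bit_double val_ordn // ltn_ord.
by rewrite oddD odd_double; case: b.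
Qed.

Lemma enc_inj : injective enc.
Proof. exact: can_inj encK. Qed.

Lemma enc_lt x : enc x < 30.
Proof. case: x => i b; rewrite /enc /=; have := ltn_ord i; case: b => /=; lia. Qed.

Lemma decK n : n < 30 -> enc (dec n) = n.
Proof.
have H : all (fun n => enc (dec n) == n) (iota 0 30) by vm_compute.
by move=> Hn; apply/eqP; move/allP: H; apply; rewrite mem_iota.
Qed.

Lemma nbl_ok (x y : T) : (enc y \in nth [::] nbl (enc x)) = @domino 14 x y.
Proof.
have H : all (fun a => all (fun b => (b \in nth [::] nbl a) == @domino 14 (dec a) (dec b))
   (iota 0 30)) (iota 0 30) by vm_compute.
move/allP: H => /(_ (enc x)); rewrite mem_iota enc_lt => /(_ isT) /allP /(_ (enc y)).
by rewrite mem_iota enc_lt !encK => /(_ isT) /eqP.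
Qed.

Lemma nbl_lt n w : n < 30 -> w \in nth [::] nbl n -> w < 30.
Proof.
have H : all (fun l => all (fun m => m < 30) l) nbl by vm_compute.
move=> Hn Hw; move/allP: H => /(_ (nth [::] nbl n)) H.
have Hm : nth [::] nbl n \in nbl by apply: mem_nth.
by move/allP: (H Hm); apply.
Qed.

Lemma eq_enc n y : (n == enc y) = (n < 30) && (dec n == y).
Proof.
case: (ltnP n 30) => Hn /=.
  by rewrite -{1}(decK Hn) (inj_eq enc_inj).
apply/negP => /eqP E; have := enc_lt y; rewrite -E ltnNge Hn.
by [].
Qed.

Definition canon (C : {set T}) : seq nat := sort leq (map enc (enum C)).

Lemma mem_canon C n : (n \in canon C) = (n < 30) && (dec n \in C).
Proof.
rewrite mem_sort; case: (ltnP n 30) => Hn /=.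
  by rewrite -{1}(decK Hn) (mem_map enc_inj) mem_enum.
apply/negP => /mapP [y _ E]; have := enc_lt y; rewrite -E ltnNge Hn.
by [].
Qed.

Lemma canon_sorted C : sorted ltn (canon C).
Proof.
rewrite ltn_sorted_uniq_leq sort_sorted ?andbT; last exact: leq_total.
have P : perm_eq (canon C) (map enc (enum C)) by rewrite /canon perm_sort.
by rewrite (perm_uniq P) (map_inj_uniq enc_inj) enum_uniq.
Qed.

Lemma canon_uniq C : uniq (canon C).
Proof. by have := canon_sorted C; rewrite ltn_sorted_uniq_leq => /andP []. Qed.

Lemma size_canon C : size (canon C) = #|C|.
Proof. by rewrite size_sort size_map cardE. Qed.

Lemma canon_all C : all (fun n => n < 30) (canon C).
Proof. by apply/allP => n; rewrite mem_canon => /andP []. Qed.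

Lemma canon_ins D x s : x \notin s -> uniq s ->
  (forall n, (n \in canon D) = (n == x) || (n \in s)) -> canon D = ins x s.
Proof.
move=> Hx Hu Hm; apply: (irr_sorted_eq ltn_trans ltnn).
- exact: canon_sorted.
- rewrite ltn_sorted_uniq_leq sort_sorted ?andbT; last exact: leq_total.
  have P : perm_eq (ins x s) (x :: s) by rewrite /ins perm_sort.
  by rewrite (perm_uniq P) /= Hx Hu.
- by move=> n; rewrite Hm /ins mem_sort in_cons.
Qed.

Lemma chk_ok s x : sorted ltn s -> all (fun n => n < 30) s -> size s <= 3 ->
  x < 30 -> chk s x.
Proof.
move=> Hs Ha Hz Hx; have := chkall_ok.
have I m : m < 30 -> m \in iota 0 30 by rewrite mem_iota.
rewrite /chkall; move: (chk) => f /andP [H0 H1].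
case: s Hs Ha Hz => [|a [|b [|c [|d t]]]] //= Hs Ha _.
- by move/allP: H0; apply; apply: I.
- move: Ha; rewrite andbT => Ha.
  move/allP: H1 => /(_ a (I _ Ha)) /andP [H _].
  by move/allP: H; apply; apply: I.
- move: Ha Hs; rewrite andbT => /andP [Ha Hb] /andP [Hab _].
  move/allP: H1 => /(_ a (I _ Ha)) /andP [_ H].
  move/allP: H => /(_ b (I _ Hb)); rewrite Hab => /andP [H _].
  by move/allP: H; apply; apply: I.
- move: Ha Hs; rewrite andbT => /and3P [Ha Hb Hc] /and3P [Hab Hbc _].
  move/allP: H1 => /(_ a (I _ Ha)) /andP [_ H].
  move/allP: H => /(_ b (I _ Hb)); rewrite Hab => /andP [_ H].
  move/allP: H => /(_ c (I _ Hc)); rewrite Hbc => H.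
  by move/allP: H; apply; apply: I.
Qed.

Lemma escape_ok (v : T) C' :
  escape (canon C') (enc v) ->
  exists w, [/\ @domino 14 v w, w \notin C' & goodb (canon C') (enc w)].
Proof.
move=> /hasP [w0 Hw /andP [Hn Hg]].
have Hl : w0 < 30 := nbl_lt (enc_lt v) Hw.
exists (dec w0); split.
- by rewrite -nbl_ok decK.
- by move: Hn; rewrite mem_canon Hl.
- by rewrite decK.
Qed.

Lemma key k C v C' : k <= 3 -> goodb (canon C) (enc v) -> cop_move k C v C' ->
  exists w, [/\ @domino 14 v w, w \notin C' & goodb (canon C') (enc w)].
Proof.
move=> Hk Hg Hm.
have Hc := chk_ok (canon_sorted C) (canon_all C).
have Hz : size (canon C) <= 3 by move: Hg => /and3P [].
have Hv : enc v \notin canon C by move: Hg => /and3P [].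
move: (Hc (enc v) Hz (enc_lt v)); rewrite /chk Hg.
case E1: (escape _ _) => //.
case E2: (if size (canon C) < 3 then _ else _) => // E3.
case: Hm => [->|[[Hs ->]|[u Hu ->]]].
- exact: escape_ok.
- apply: escape_ok.
  have Hs3 : size (canon C) < 3 by rewrite size_canon; exact: leq_trans Hs Hk.
  move: E2; rewrite Hs3 => E2.
  rewrite (@canon_ins _ (enc v) (canon C)) //; first exact: canon_uniq.
  move=> n; rewrite !mem_canon in_setU1 eq_enc.
  by case: (n < 30).
- apply: escape_ok.
  have Hu' : enc u \in canon C by rewrite mem_canon enc_lt encK Hu.
  move/allP: E3 => /(_ _ Hu') E3.
  rewrite (@canon_ins _ (enc v) (rem (enc u) (canon C))) //.
  + by apply: contra Hv; apply: mem_rem.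
  + by apply: rem_uniq; exact: canon_uniq.
  + move=> n; rewrite (mem_rem_uniq _ (canon_uniq C)) !inE !mem_canon !inE !eq_enc.
    by case: (n < 30).
Qed.

Lemma no_win k C v : k <= 3 -> cops_win (@domino 14) k C v ->
  goodb (canon C) (enc v) -> False.
Proof.
move=> Hk H; elim: H => C0 v0 C' Hm _ IH Hg.
have [w [Hw Hn Hg']] := key Hk Hg Hm.
exact: (IH w Hw Hn Hg').
Qed.

Theorem mainTheorem13 : forall k : nat, Ent_cops_win (@domino 14) k -> 4 <= k.
Proof.
move=> k H; rewrite leqNgt; apply/negP => Hk.
apply: (@no_win k set0 (ord0, false) Hk (H _)).
have -> : canon set0 = [::] by apply: size0nil; rewrite size_canon cards0.
by vm_compute.
Qed.
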